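(* For every ProbNetKAT program $p$, the matrix $\mathcal{S}[\![p]\!]$ indexed by $2^{\mathsf{Pk}}\times 2^{\mathsf{Pk}}$ is (right-)stochastic: all entries are nonnegative and each row sums to $1$.
   Context: $\mathsf{Pk}$ is a finite set of packets (records of finitely many fields with finitely many values). For each ProbNetKAT program $p$, $\mathcal{B}[\![p]\!]\in[0,1]^{2^{\mathsf{Pk}}\times 2^{\mathsf{Pk}}}$ denotes its matrix semantics, defined compositionally ($[\varphi]$ = Iverson bracket): $\mathcal{B}[\![\mathsf{false}]\!]_{ab}=[b=\emptyset]$; $\mathcal{B}[\![\mathsf{true}]\!]_{ab}=[a=b]$; $\mathcal{B}[\![f=n]\!]_{ab}=[b=\{\pi\in a:\pi.f=n\}]$; $\mathcal{B}[\![\neg t]\!]_{ab}=[b\subseteq a]\mathcal{B}[\![t]\!]_{a,a-b}$; $\mathcal{B}[\![f\leftarrow n]\!]_{ab}=[b=\{\pi[f:=n]:\pi\in a\}]$; $\mathcal{B}[\![p\,\&\,q]\!]_{ab}=\sum_{c,d}[c\cup d=b]\mathcal{B}[\![p]\!]_{ac}\mathcal{B}[\![q]\!]_{ad}$; $\mathcal{B}[\![p;q]\!]=\mathcal{B}[\![p]\!]\mathcal{B}[\![q]\!]$; $\mathcal{B}[\![p\oplus_r q]\!]=r\mathcal{B}[\![p]\!]+(1-r)\mathcal{B}[\![q]\!]$; $\mathcal{B}[\![p^*]\!]_{ab}=\lim_n\mathcal{B}[\![p^{(n)}]\!]_{ab}$, where $p^{(0)}=\mathsf{true}$, $p^{(n+1)}=\mathsf{true}\,\&\,(p;p^{(n)})$.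 (Here $\&$ is union and $;$ sequencing; for predicates, $\&$ is disjunction and $;$ conjunction.) The small-step matrix is $\mathcal{S}[\![p]\!]_{(a,b),(a',b')} := [b'=b\cup a]\cdot\mathcal{B}[\![p]\!]_{a,a'}$ for $a,b,a',b'\subseteq\mathsf{Pk}$. *)

(* Defs.v *)
From HB Require Import structures.
From mathcomp Require Import all_boot all_order all_algebra.
From mathcomp Require Import all_classical all_reals topology normedtype sequences.
Set Implicit Arguments. Unset Strict Implicit. Unset Printing Implicit Defensive.
Import Order.TTheory GRing.Theory Num.Theory numFieldNormedType.Exports.
Local Open Scope ring_scope.

Definition packet (F V : finType) := {ffun F -> V}.

Inductive pred_pnk (F V : finType) : Type :=
| PFalse
| PTrue
| PTest of F & V
| PNeg of pred_pnk F V
| POr of pred_pnk F V & pred_pnk F V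
| PAnd of pred_pnk F V & pred_pnk F V.

Inductive prog (R : Type) (F V : finType) : Type :=
| Pred of pred_pnk F V
| Assign of F & V
| Par of prog R F V & prog R F V
| Seq of prog R F V & prog R F V
| Choice of prog R F V & R & prog R F V
| Star of prog R F V.

Fixpoint wf_prog (R : realType) (F V : finType) (p : prog R F V) : Prop :=
  match p with
  | Pred _ | Assign _ _ => True
  | Par p q | Seq p q => wf_prog p /\ wf_prog q
  | Choice p r q => 0 <= r <= 1 /\ wf_prog p /\ wf_prog q
  | Star p => wf_prog p
  end.

Section Sem.
Variables (R : realType) (F V : finType).
Local Notation Pk := (packet F V).

Definition mx := {set Pk} -> {set Pk} -> R.

Definition iv (b : bool) : R := if b then 1 else 0.

Definition mx_id : mx := fun a b => iv (a == b).
Definition mx_mul (M N : mx) : mx := fun a b => \sum_(c : {set Pk}) M a c * N c b.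
Definition mx_par (M N : mx) : mx :=
  fun a b => \sum_(c : {set Pk}) \sum_(d : {set Pk}) iv (c :|: d == b) * M a c * N a d.
Definition mx_choice (r : R) (M N : mx) : mx := fun a b => r * M a b + (1 - r) * N a b.

Definition upd (pi : Pk) (f : F) (n : V) : Pk :=
  [ffun g => if g == f then n else pi g].

Fixpoint Bpred (t : pred_pnk F V) : mx :=
  match t with
  | PFalse => fun a b => iv (b == finset.set0)
  | PTrue => mx_id
  | PTest f n => fun a b => iv (b == [set pi in a | pi f == n])
  | PNeg t => fun a b => iv (b \subset a) * Bpred t a (a :\: b)
  | POr t u => mx_par (Bpred t) (Bpred u)
  | PAnd t u => mx_mul (Bpred t) (Bpred u)
  end.

(* B[[p^(n)]] from B[[p]]: p^(0) = true, p^(n+1) = true & (p ; p^(n)) *)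
Fixpoint star_approx (M : mx) (n : nat) : mx :=
  match n with
  | 0 => mx_id
  | n'.+1 => mx_par mx_id (mx_mul M (star_approx M n'))
  end.

Fixpoint B (p : prog R F V) : mx :=
  match p with
  | Pred t => Bpred t
  | Assign f n => fun a b => iv (b == [set upd pi f n | pi in a])
  | Par p q => mx_par (B p) (B q)
  | Seq p q => mx_mul (B p) (B q)
  | Choice p r q => mx_choice r (B p) (B q)
  | Star p => fun a b => limn (fun n : nat => (star_approx (B p) n a b : R))
  end.

Definition S (p : prog R F V) (x y : {set Pk} * {set Pk}) : R :=
  iv (y.2 == x.2 :|: x.1) * B p x.1 y.1.

End Sem.

(* Main.v *)
Require Import Defs.
From HB Require Import structures.
From mathcomp Require Import all_boot all_order all_algebra.
From mathcomp Require Import all_classical all_reals topology normedtype sequences.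
Import Order.TTheory GRing.Theory Num.Theory numFieldNormedType.Exports.
Local Open Scope ring_scope.
Set Implicit Arguments. Unset Strict Implicit.

Section H.
Variables (R : realType) (F V : finType).
Local Notation Pk := (packet F V).
Local Notation mx := (@mx R F V).
Local Notation iv := (@iv R).

Definition stoch (M : mx) := (forall a b, 0 <= M a b) /\ (forall a, \sum_b M a b = 1).

Lemma iv_ge0 b : 0 <= iv b. Proof. by case: b; rewrite /Defs.iv. Qed.
Lemma iv_le1 b : iv b <= 1. Proof. by case: b; rewrite /Defs.iv. Qed.

Lemma sum_iv (x : {set Pk}) (f : {set Pk} -> R) : \sum_b iv (x == b) * f b = f x.
Proof.
rewrite (bigD1 x) //= eqxx mul1r big1 ?addr0 // => b /negPf.
by rewrite eq_sym => ->; rewrite mul0r.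
Qed.

Lemma sum_iv1 (x : {set Pk}) : \sum_b iv (b == x) = 1.
Proof.
rewrite -[RHS](sum_iv x (fun _ => 1)); apply: eq_bigr => b _.
by rewrite mulr1 eq_sym.
Qed.

Lemma sum_ivl (x : {set Pk}) : \sum_b iv (x == b) = 1.
Proof. by rewrite -[RHS](sum_iv x (fun _ => 1)); apply: eq_bigr => b _; rewrite mulr1. Qed.

Lemma stoch_id : stoch (@mx_id R F V).
Proof.
split=> [a b|a]; first exact: iv_ge0.
by rewrite /mx_id -[RHS](sum_iv a (fun _ => 1)); apply: eq_bigr => b _; rewrite mulr1.
Qed.

Lemma stoch_mul M N : stoch M -> stoch N -> stoch (mx_mul M N).
Proof.
move=> [M0 M1] [N0 N1]; split=> [a b|a].
  by apply: sumr_ge0 => c _; apply: mulr_ge0.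
rewrite /mx_mul exchange_big /= -[RHS](M1 a); apply: eq_bigr => c _.
by rewrite -mulr_sumr N1 mulr1.
Qed.

Lemma stoch_par M N : stoch M -> stoch N -> stoch (mx_par M N).
Proof.
move=> [M0 M1] [N0 N1]; split=> [a b|a].
  by apply: sumr_ge0 => c _; apply: sumr_ge0 => d _; rewrite !mulr_ge0 ?iv_ge0.
rewrite /mx_par exchange_big /= -[RHS](M1 a); apply: eq_bigr => c _.
rewrite exchange_big /= -[RHS]mulr1 -(N1 a) mulr_sumr; apply: eq_bigr => d _.
by rewrite -!mulr_suml sum_ivl mul1r.
Qed.

Lemma stoch_choice r M N : 0 <= r <= 1 -> stoch M -> stoch N -> stoch (mx_choice r M N).
Proof.
move=> /andP[r0 r1] [M0 M1] [N0 N1]; split=> [a b|a].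
  by rewrite /mx_choice addr_ge0 ?mulr_ge0 ?subr_ge0.
by rewrite /mx_choice big_split /= -!mulr_sumr M1 N1 !mulr1 addrC subrK.
Qed.


Definition supp (M : mx) := forall a b : {set Pk}, ~~ (b \subset a) -> M a b = 0.

Lemma Bpred_ok (t : pred_pnk F V) : stoch (Bpred R t) /\ supp (Bpred R t).
Proof.
elim: t => [||f n|t [[T0 T1] Ts]|t [Tst Ts] u [Ust Us]|t [Tst Ts] u [Ust Us]] /=.
- split; first split=> [a b|a]; first exact: iv_ge0.
    by rewrite sum_iv1.
  move=> a b; rewrite /Defs.iv; case: eqP => // ->; by rewrite finset.sub0set.
- split; first exact: stoch_id.
  move=> a b; rewrite /mx_id /Defs.iv; case: eqP => // -> /negP[]; exact: subxx.
- split; first split=> [a b|a]; first exact: iv_ge0.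
    by rewrite sum_iv1.
  move=> a b; rewrite /Defs.iv; case: eqP => // -> /negP[]; apply/fintype.subsetP => x; rewrite inE => /andP[].
  by [].
- split; first split=> [a b|a]; first by rewrite mulr_ge0 ?iv_ge0.
    pose g b := (a :\: b) :|: (b :\: a).
    have gK : involutive g.
      move=> b; apply/setP => x; rewrite /g !inE.
      by case: (x \in a); case: (x \in b).
    rewrite (reindex_inj (inv_inj gK)) /= -[RHS](T1 a); apply: eq_bigr => b _.
    have [sba|nsba] := boolP (b \subset a).
      have -> : g b \subset a.
        by apply/fintype.subsetP => x; rewrite /g !inE => /orP[/andP[]|/andP[]] //; move=> _ /(fintype.subsetP sba).
      have -> : a :\: g b = b.
        apply/setP => x; rewrite /g !inE; have := fintype.subsetP sba x.
        by case: (x \in a); case: (x \in b) => //= ->.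
      by rewrite /Defs.iv mul1r.
    rewrite (Ts _ _ nsba).
    suff -> : g b \subset a = false by rewrite /Defs.iv mul0r.
    apply/negP => /fintype.subsetP sg; move/fintype.subsetPn: nsba => [x xb xa].
    by have := sg x; rewrite /g !inE xb (negbTE xa) /= => /(_ isT).
  move=> a b nsb; by rewrite /Defs.iv (negbTE nsb) mul0r.
- split; first exact: stoch_par.
  move=> a b nsb; rewrite /mx_par; apply: big1 => c _; apply: big1 => d _.
  case: eqP => [E|]; last by rewrite /Defs.iv !mul0r.
  have [sca|nsca] := boolP (c \subset a); last by rewrite Ts // mulr0 mul0r.
  have [sda|nsda] := boolP (d \subset a); last by rewrite Us // mulr0.
  by move: nsb; rewrite -E finset.subUset sca sda.
- split; first exact: stoch_mul.
  move=> a b nsb; rewrite /mx_mul; apply: big1 => c _.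
  have [sca|nsca] := boolP (c \subset a); last by rewrite Ts // mul0r.
  have [sbc|nsbc] := boolP (b \subset c); last by rewrite Us // mulr0.
  by move: nsb; rewrite (fintype.subset_trans sbc sca).
Qed.

Section Star.
Variable M : mx.
Hypothesis HM : stoch M.
Local Notation st := (star_approx M).

Lemma star_stoch n : stoch (st n).
Proof. elim: n => [|n IH] /=; first exact: stoch_id. exact: stoch_par stoch_id (stoch_mul HM IH). Qed.

Lemma star_succ n a b :
  st n.+1 a b = \sum_y iv (a :|: y == b) * mx_mul M (st n) a y.
Proof.
rewrite /= /mx_par exchange_big /=; apply: eq_bigr => d _.
rewrite -mulr_suml; congr (_ * _).
rewrite -[RHS](sum_iv a (fun c => iv (c :|: d == b))); apply: eq_bigr => c _.
by rewrite /mx_id mulrC.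
Qed.

Definition G n (a c : {set Pk}) := \sum_(b : {set Pk}) iv (b \subset c) * st n a b.

Lemma iv_subU (a y c : {set Pk}) : iv (a :|: y \subset c) = iv (a \subset c) * iv (y \subset c).
Proof. rewrite finset.subUset; case: (a \subset c); case: (y \subset c); by rewrite /Defs.iv /= ?mulr1 ?mul0r ?mulr0 ?mul1r. Qed.

Lemma G_succ n a c : G n.+1 a c = iv (a \subset c) * \sum_e M a e * G n e c.
Proof.
rewrite /G.
under eq_bigr do rewrite star_succ mulr_sumr.
rewrite exchange_big /=.
under eq_bigr => y _ do under eq_bigr => b _ do rewrite mulrCA.
under eq_bigr => y _ do rewrite sum_iv iv_subU -mulrA.
rewrite -mulr_sumr; congr (_ * _).
rewrite /mx_mul /G; under eq_bigr => y _ do rewrite mulr_sumr.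
rewrite exchange_big /=; apply: eq_bigr => e _; rewrite mulr_sumr; apply: eq_bigr => y _.
by rewrite mulrCA.
Qed.

Lemma G0 a c : G 0 a c = iv (a \subset c).
Proof. by rewrite /G /= /mx_id; under eq_bigr do rewrite mulrC; rewrite sum_iv. Qed.

Lemma G_ge0 n a c : 0 <= G n a c.
Proof. by apply: sumr_ge0 => b _; rewrite mulr_ge0 ?iv_ge0 //; case: (star_stoch n). Qed.

Lemma G_le1 n a c : G n a c <= 1.
Proof.
case: (star_stoch n) => S0 S1; rewrite -(S1 a); apply: ler_sum => b _.
by rewrite ler_piMl ?iv_le1.
Qed.

Lemma G_decr n a c : G n.+1 a c <= G n a c.
Proof.
case: HM => M0 M1.
elim: n a c => [|n IH] a c.
  rewrite G_succ G0 -[leRHS]mulr1 ler_wpM2l ?iv_ge0 // -(M1 a).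
  by apply: ler_sum => e _; rewrite ler_piMr ?G_le1.
rewrite (G_succ n.+1) (G_succ n) ler_wpM2l ?iv_ge0 //.
by apply: ler_sum => e _; rewrite ler_wpM2l.
Qed.

Lemma G_cvg a c : cvgn (fun n => G n a c).
Proof.
apply: nonincreasing_is_cvgn.
  by apply/nonincreasing_seqP => n; exact: G_decr.
by exists 0 => _ [n _ <-]; exact: G_ge0.
Qed.

Lemma cvg_sumP (I : finType) (P : pred I) (u : I -> nat -> R) :
  (forall i, P i -> cvgn (u i)) -> cvgn (fun n => \sum_(i | P i) u i n).
Proof.
move=> Hu; apply/cvg_ex; exists (\sum_(i | P i) limn (u i)).
apply: cvg_big => //; exact: add_continuous.
Qed.

Lemma G_split n a b :
  G n a b = st n a b + \sum_(b' : {set Pk} | b' \proper b) st n a b'.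
Proof.
rewrite /G (bigD1 b) //= subxx /Defs.iv mul1r; congr (_ + _).
rewrite big_mkcond [RHS]big_mkcond; apply: eq_bigr => b' _.
by rewrite finset.properEneq; case: (b' != b); case: (b' \subset b); rewrite /= ?mul1r ?mul0r.
Qed.

Lemma st_cvg a b : cvgn (fun n => st n a b).
Proof.
move: {2}#|b| (leqnn #|b|) => k; elim: k b => [|k IH] b Hb.
  rewrite leqn0 cards_eq0 in Hb; move/eqP: Hb => ->.
  suff -> : (fun n => st n a finset.set0) = (fun n => G n a finset.set0) by exact: G_cvg.
  apply: funext => n; rewrite G_split big1 ?addr0 // => b'.
  by move=> /fintype.proper_card; rewrite finset.cards0.
suff -> : (fun n => st n a b) = (fun n => G n a b - \sum_(b' : {set Pk} | b' \proper b) st n a b').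
  apply: is_cvgB; first exact: G_cvg.
  apply: cvg_sumP => b' pb'; apply: IH.
  by rewrite -ltnS (leq_trans (fintype.proper_card pb')).
by apply: funext => n; rewrite G_split addrK.
Qed.

Lemma star_lim_stoch : stoch (fun a b => limn (fun n => st n a b)).
Proof.
split=> [a b|a].
  apply: limr_ge; first exact: st_cvg.
  by apply: nearW => n; case: (star_stoch n).
have H : ((fun n : nat => \sum_b st n a b) @ \oo -->  \sum_b limn (fun n => st n a b))%classic.
  by apply: cvg_big => // [|b _]; [exact: add_continuous | exact: st_cvg].
have H1 : (fun n : nat => \sum_b st n a b) = (fun _ => 1).
  by apply: funext => n; case: (star_stoch n) => _ ->.
rewrite H1 in H; rewrite -(cvg_lim (@Rhausdorff R) H); exact: (lim_cst (@Rhausdorff R)).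
Qed.

End Star.

Lemma B_stoch (p : prog R F V) : wf_prog p -> stoch (B p).
Proof.
elim: p => [t|f n|p IHp q IHq|p IHp q IHq|p IHp r q IHq|p IHp] /=.
- by move=> _; case: (Bpred_ok t).
- move=> _; split=> [a b|a]; first exact: iv_ge0.
  exact: sum_iv1.
- by case=> /IHp Hp /IHq Hq; exact: stoch_par.
- by case=> /IHp Hp /IHq Hq; exact: stoch_mul.
- by case=> Hr [/IHp Hp /IHq Hq]; exact: stoch_choice.
- by move=> /IHp Hp; exact: (star_lim_stoch Hp).
Qed.

End H.

Theorem lemma4p1 (R : realType) (F V : finType) (p : prog R F V) :
  wf_prog p ->
  (forall x y : {set packet F V} * {set packet F V}, 0 <= S p x y) /\
  (forall x : {set packet F V} * {set packet F V},
      \sum_(y : {set packet F V} * {set packet F V}) S p x y = 1).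
Proof.
move=> /B_stoch [B0 B1]; split=> [x y|[a b]].
  by rewrite /S mulr_ge0 ?iv_ge0.
rewrite /S /= -[RHS](B1 a).
rewrite -(pair_bigA _ (fun a' b' => iv R (b' == b :|: a) * B p a a')) /=.
apply: eq_bigr => a' _.
rewrite -mulr_suml (eq_bigr (fun b' => iv R (b :|: a == b'))) ?sum_ivl ?mul1r // => b' _.
by rewrite eq_sym.
Qed.
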